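(* Let $R$ be a commutative ring with $1$ and $M$ a finitely generated flat $R$-module. Then the annihilator $\operatorname{Ann}_R(M)$ is a pure ideal of $R$.
   Context: An ideal $I$ of a commutative ring $R$ is called pure if the canonical ring map $R\to R/I$ is flat, i.e. $R/I$ is a flat $R$-module. *)

(* Defs.v *)
From HB Require Import structures.
From mathcomp Require Import all_boot all_order all_algebra.
From mathcomp Require Import generic_quotient ring_quotient.
From Stdlib Require Import ClassicalEpsilon.

Set Implicit Arguments.
Unset Strict Implicit.
Unset Printing Implicit Defensive.

Import GRing.Theory.
Local Open Scope ring_scope.
Local Open Scope quotient_scope.

Definition pbool (P : Prop) : bool :=
  if excluded_middle_informative P then true else false.

Lemma pboolP (P : Prop) : reflect P (pbool P).
Proof. by rewrite /pbool; case: excluded_middle_informative => h; constructor. Qed.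

Section Modules.
Variable R : comPzRingType.

Definition bilinear_map (N M P : lmodType R) (b : N -> M -> P) : Prop :=
  (forall (a : R) (n1 n2 : N) (m : M), b (a *: n1 + n2) m = a *: b n1 m + b n2 m) /\
  (forall (a : R) (n : N) (m1 m2 : M), b n (a *: m1 + m2) = a *: b n m1 + b n m2).

(* The element sum_i n_i (x) m_i of the tensor product N (x)_R M, given by the
   list s = [:: (n_1, m_1); ...], is zero.  The tensor product is described by
   its universal property: an element of N (x) M vanishes iff every R-bilinear
   map out of N x M sends it to zero.  Every element of N (x) M is such a sum. *)
Definition tensor_zero (N M : lmodType R) (s : seq (N * M)) : Prop :=
  forall (P : lmodType R) (b : N -> M -> P), bilinear_map b ->
    \sum_(x <- s) b x.1 x.2 = 0.

(* M is flat: for every injective R-linear map f : N -> N', the induced map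
   f (x) id_M : N (x) M -> N' (x) M is injective (i.e. has zero kernel). *)
Definition flat (M : lmodType R) : Prop :=
  forall (N N' : lmodType R) (f : {linear N -> N'}), injective f ->
  forall s : seq (N * M),
    tensor_zero [seq (f x.1, x.2) | x <- s] -> tensor_zero s.

Definition finitely_generated (M : lmodType R) : Prop :=
  exists gens : seq M, forall m : M,
    exists c : seq R, m = \sum_(i < size gens) c`_i *: gens`_i.

Definition ann (M : lmodType R) : {pred R} :=
  fun r => pbool (forall m : M, r *: m = 0).

Lemma ann_zmod_closed (M : lmodType R) : zmod_closed (ann M).
Proof.
split; first by apply/pboolP => m; rewrite scale0r.
move=> x y /pboolP hx /pboolP hy; apply/pboolP => m.
by rewrite scalerBl hx hy subr0.
Qed.

Lemma ann_mul_closed (M : lmodType R) a x : x \in ann M -> a * x \in ann M.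
Proof.
move=> /pboolP hx; apply/pboolP => m.
by rewrite -scalerA hx scaler0.
Qed.

End Modules.

HB.instance Definition _ (R : comPzRingType) (M : lmodType R) :=
  GRing.isZmodClosed.Build R (ann M) (ann_zmod_closed M).

Section QuotMod.
Variables (R : comPzRingType) (I : zmodClosed R).
Hypothesis hI : forall a x, x \in I -> a * x \in I.

Local Notation Q0 := (Quotient.quot I).

Definition qscale (a : R) (x : Q0) : Q0 := \pi_Q0 (a * repr x).

Lemma qscale_pi a y : qscale a (\pi_Q0 y) = \pi_Q0 (a * y).
Proof.
rewrite /qscale; apply/eqmodP => /=; rewrite Quotient.equivE -mulrBr.
by apply: hI; rewrite Quotient.idealrBE reprK.
Qed.

Lemma qscalerA a b v : qscale a (qscale b v) = qscale (a * b) v.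
Proof. move: v; apply: quotW. intros y. by rewrite (qscale_pi b) (qscale_pi a) (qscale_pi (a * b)) mulrA. Qed.

Lemma qscale1r : left_id 1 qscale.
Proof. apply: quotW. intros y. by rewrite qscale_pi mul1r. Qed.

Lemma qscalerDr : right_distributive qscale +%R.
Proof.
move=> a; apply: quotW. intros u. apply: quotW. intros v.
have pD := raddfD (\pi_Q0).
by rewrite -pD !qscale_pi mulrDr pD.
Qed.

Lemma qscalerDl v : {morph qscale^~ v : a b / a + b}.
Proof.
move=> a b; move: v; apply: quotW. intros v.
by rewrite !qscale_pi mulrDl Quotient.pi_add.
Qed.

Definition quot_mod of (forall a x, x \in I -> a * x \in I) := Q0.

HB.instance Definition _ := GRing.Zmodule.on (quot_mod hI).
HB.instance Definition _ := GRing.Zmodule_isLmodule.Build R (quot_mod hI)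
  qscalerA qscale1r qscalerDr qscalerDl.
End QuotMod.

Definition pure_ideal (R : comPzRingType) (I : zmodClosed R)
  (hI : forall a x, x \in I -> a * x \in I) : Prop :=
  flat (quot_mod hI).

(* Main.v *)
Require Import Defs.
From HB Require Import structures.
From mathcomp Require Import all_boot all_order all_algebra.
From mathcomp Require Import generic_quotient ring_quotient.
From mathcomp Require Import ring.

Set Implicit Arguments.
Unset Strict Implicit.
Unset Printing Implicit Defensive.
Import GRing.Theory.
Local Open Scope ring_scope.
Local Open Scope quotient_scope.

Section VQuot.
Variables (R : comPzRingType) (V : lmodType R) (S : zmodClosed V).
Hypothesis hS : forall (a : R) (v : V), v \in S -> a *: v \in S.

Local Notation Q0 := (Quotient.quot S).

Definition vscale (a : R) (x : Q0) : Q0 := \pi_Q0 (a *: repr x).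

Lemma vscale_pi a y : vscale a (\pi_Q0 y) = \pi_Q0 (a *: y).
Proof.
rewrite /vscale; apply/eqmodP => /=; rewrite Quotient.equivE -scalerBr.
by apply: hS; rewrite Quotient.idealrBE reprK.
Qed.

Lemma vscalerA a b v : vscale a (vscale b v) = vscale (a * b) v.
Proof. move: v; apply: quotW => y. by rewrite (vscale_pi b) (vscale_pi a) (vscale_pi (a * b)) scalerA. Qed.

Lemma vscale1r : left_id 1 vscale.
Proof. apply: quotW => y. by rewrite vscale_pi scale1r. Qed.

Lemma vscalerDr : right_distributive vscale +%R.
Proof.
move=> a; apply: quotW => u; apply: quotW => v.
have pD := raddfD (\pi_Q0).
by rewrite -pD !vscale_pi scalerDr pD.
Qed.

Lemma vscalerDl v : {morph vscale^~ v : a b / a + b}.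
Proof.
move=> a b; move: v; apply: quotW => v.
by rewrite !vscale_pi scalerDl Quotient.pi_add.
Qed.

Definition vquot of (forall (a : R) (v : V), v \in S -> a *: v \in S) := Q0.

HB.instance Definition _ := GRing.Zmodule.on (vquot hS).
HB.instance Definition _ := GRing.Zmodule_isLmodule.Build R (vquot hS)
  vscalerA vscale1r vscalerDr vscalerDl.

Definition vpi (v : V) : vquot hS := \pi_Q0 v.

Lemma vpiZ a v : vpi (a *: v) = a *: vpi v.
Proof. by rewrite /vpi -vscale_pi. Qed.

Lemma vpiD u v : vpi (u + v) = vpi u + vpi v.
Proof. by rewrite /vpi Quotient.pi_add. Qed.

Lemma vpi0P v : vpi v = 0 -> v \in S.
Proof.
move=> h. have : (v - 0) \in S.
  rewrite Quotient.idealrBE; apply/eqP. rewrite -/(vpi v) h. symmetry. exact: (raddf0 (\pi_Q0)).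
by rewrite subr0.
Qed.
End VQuot.

Section Span.
Variables (R : comPzRingType) (V : lmodType R).

Definition spanI (J : {pred R}) : {pred V} := fun x =>
  pbool (exists s : seq (R * V), all (fun p => p.1 \in J) s /\ x = \sum_(p <- s) p.1 *: p.2).

Lemma spanI_zmod (J : zmodClosed R) : zmod_closed (spanI J).
Proof.
split; first by apply/pboolP; exists [::]; rewrite big_nil.
move=> x y /pboolP [s [hs ->]] /pboolP [t [ht ->]]; apply/pboolP.
exists (s ++ [seq (- p.1, p.2) | p <- t]); split.
  rewrite all_cat hs /= all_map; apply/allP => p /= pt.
  by rewrite rpredN; exact: (allP ht).
rewrite big_cat big_map /= -sumrN; congr (_ + _); apply: eq_bigr => p _.
by rewrite scaleNr.
Qed.

HB.instance Definition _ (J : zmodClosed R) :=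
  GRing.isZmodClosed.Build V (spanI J) (spanI_zmod J).

Lemma spanIZ (J : zmodClosed R) (hJ : forall a x, x \in J -> a * x \in J) a x :
  x \in spanI J -> a *: x \in spanI J.
Proof.
move=> /pboolP [s [hs ->]]; apply/pboolP.
exists [seq (a * p.1, p.2) | p <- s]; split.
  rewrite all_map; apply/allP => p /= ps; apply: hJ; exact: (allP hs).
rewrite big_map scaler_sumr; apply: eq_bigr => p _; by rewrite scalerA.
Qed.

Lemma spanI1 (J : {pred R}) c v : c \in J -> c *: v \in spanI J.
Proof.
move=> hc; apply/pboolP; exists [:: (c, v)]; split; first by rewrite /= hc.
by rewrite big_seq1.
Qed.
End Span.

Section Bil.
Variables (R : comPzRingType).

Lemma bil_props (N M P : lmodType R) (b : N -> M -> P) : bilinear_map b ->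
  [/\ (forall m, b 0 m = 0), (forall n, b n 0 = 0),
      (forall n1 n2 m, b (n1 + n2) m = b n1 m + b n2 m),
      (forall a n m, b (a *: n) m = a *: b n m) &
      (forall a n m, b n (a *: m) = a *: b n m)].
Proof.
move=> [h1 h2].
have b0 : forall m, b 0 m = 0.
  move=> m; have e := h1 1 0 0 m; rewrite !scale1r addr0 in e.
  by apply: (@addrI _ (b 0 m)); rewrite addr0 -e.
have b0' : forall n, b n 0 = 0.
  move=> n; have e := h2 1 n 0 0; rewrite !scale1r addr0 in e.
  by apply: (@addrI _ (b n 0)); rewrite addr0 -e.
split => //.
- by move=> n1 n2 m; have := h1 1 n1 n2 m; rewrite !scale1r.
- by move=> a n m; rewrite -[a *: n]addr0 h1 b0 addr0.
- by move=> a n m; rewrite -[a *: m]addr0 h2 b0' addr0.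
Qed.
End Bil.

Section QB.
Variables (R : comPzRingType) (J : zmodClosed R).
Hypothesis hJ : forall a x, x \in J -> a * x \in J.

Definition qpi (r : R) : quot_mod hJ := \pi_(Quotient.quot J) r.
Definition qrep (q : quot_mod hJ) : R := repr (q : Quotient.quot J).

Lemma qpiZ c r : c *: qpi r = qpi (c * r).
Proof. exact: qscale_pi. Qed.

Lemma qpi_repr q : qpi (qrep q) = q.
Proof. exact: reprK. Qed.

Lemma qpiD x y : qpi (x + y) = qpi x + qpi y.
Proof. by rewrite /qpi Quotient.pi_add. Qed.

Lemma qpi_eq x y : x - y \in J -> qpi x = qpi y.
Proof. by rewrite Quotient.idealrBE => /eqP. Qed.

Lemma qpi0 r : r \in J -> qpi r = 0.
Proof.
move=> h; have -> : (0 : quot_mod hJ) = qpi 0 by rewrite /qpi raddf0.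
by apply: qpi_eq; rewrite subr0.
Qed.

Lemma qrep_pi r : qrep (qpi r) - r \in J.
Proof. by rewrite Quotient.idealrBE reprK. Qed.

Lemma qind (P : quot_mod hJ -> Prop) : (forall r, P (qpi r)) -> forall q, P q.
Proof. by move=> h q; rewrite -(qpi_repr q). Qed.

Variable V : lmodType R.
Let hS := @spanIZ R V J hJ.

Lemma vpi_eq u w : u - w \in spanI J -> vpi hS u = vpi hS w.
Proof. by rewrite Quotient.idealrBE => /eqP. Qed.

Definition qb (q : quot_mod hJ) (v : V) : vquot hS := vpi hS (qrep q *: v).

Lemma qb_pi r v : qb (qpi r) v = vpi hS (r *: v).
Proof. by apply: vpi_eq; rewrite -scalerBl; apply: spanI1; apply: qrep_pi. Qed.

Lemma qb_bil : bilinear_map qb.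
Proof.
split.
  move=> c q1 q2 m; elim/qind: q1 => r1; elim/qind: q2 => r2.
  by rewrite qpiZ -qpiD !qb_pi scalerDl -scalerA vpiD vpiZ.
move=> c q m1 m2; rewrite /qb scalerDr scalerA mulrC -scalerA vpiD vpiZ.
by [].
Qed.

Lemma qb_bil2 : bilinear_map (fun v q => qb q v).
Proof. by have [h1 h2] := qb_bil; split => *; rewrite ?h1 ?h2. Qed.

Lemma vpi0 v : v \in spanI J -> vpi hS v = 0.
Proof.
move=> h; have -> : (0 : vquot hS) = vpi hS 0 by rewrite /vpi raddf0.
by apply: vpi_eq; rewrite subr0.
Qed.
End QB.

Section KerA.
Variables (R : comPzRingType) (a : R).

Definition kerm : {pred R} := fun r => a * r == 0.

Lemma kerm_zmod : zmod_closed kerm.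
Proof.
split; first by rewrite /kerm unfold_in /= mulr0.
move=> x y; rewrite !unfold_in /= => /eqP hx /eqP hy.
by rewrite mulrBr hx hy subr0.
Qed.

HB.instance Definition _ := GRing.isZmodClosed.Build R kerm kerm_zmod.

Lemma kerm_ideal c x : x \in kerm -> c * x \in kerm.
Proof.
rewrite !unfold_in /= => /eqP hx. by rewrite mulrCA hx mulr0.
Qed.

Definition fk (q : quot_mod kerm_ideal) : R^o := a * qrep q.

Lemma fk_pi r : fk (qpi kerm_ideal r) = a * r.
Proof.
rewrite /fk; apply/eqP; rewrite -subr_eq0 -mulrBr.
have := qrep_pi kerm_ideal r. by rewrite unfold_in.
Qed.

Lemma fk_lin : linear fk.
Proof.
move=> c q1 q2; rewrite -(qpi_repr q1) -(qpi_repr q2).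
by rewrite qpiZ -qpiD !fk_pi mulrDr mulrCA.
Qed.

HB.instance Definition _ := GRing.isLinear.Build R (quot_mod kerm_ideal) R^o _ fk fk_lin.

Lemma fk_inj : injective fk.
Proof.
move=> q1 q2; rewrite -(qpi_repr q1) -(qpi_repr q2).
rewrite !fk_pi => e; apply: qpi_eq; by rewrite unfold_in /= mulrBr e subrr.
Qed.

Lemma flat_kill (M : lmodType R) (hflat : flat M) (x : M) :
  a *: x = 0 -> x \in spanI kerm.
Proof.
move=> ax.
have htz : tensor_zero [seq ((fk : {linear _ -> _}) y.1, y.2) | y <- [:: (qpi kerm_ideal 1, x)]].
  move=> P b hb; have [b0 b0' bD bZ bZ'] := bil_props hb.
  rewrite big_map big_seq1 /= fk_pi mulr1.
  have -> : (a : R^o) = a *: (1 : R^o) by rewrite /GRing.scale /= mulr1.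
  by rewrite bZ -bZ' ax b0'.
have := hflat _ _ (fk : {linear _ -> _}) fk_inj _ htz _ _ (qb_bil kerm_ideal M).
rewrite big_seq1 /= qb_pi scale1r.
move/(vpi0P). done.
Qed.
End KerA.

Section Nak.
Variables (R : comPzRingType) (J : zmodClosed R).
Hypothesis hJ : forall a x, x \in J -> a * x \in J.
Variable M : lmodType R.

Definition spn (t : seq M) (x : M) := exists c : nat -> R, x = \sum_(i < size t) c i *: t`_i.

Lemma spnJ_sum (t : seq M) (u : R) (hu : forall m, spn t (u *: m)) (s : seq (R * M)) :
  all (fun p => p.1 \in J) s ->
  exists c : nat -> R, (forall i, c i \in J) /\
    \sum_(p <- s) p.1 *: (u *: p.2) = \sum_(i < size t) c i *: t`_i.
Proof.
elim: s => [|p s IH] /=.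
  move=> _; exists (fun _ => 0); split; first by move=> i; exact: rpred0.
  by rewrite big_nil big1 // => i _; rewrite scale0r.
move=> /andP [hp hs]; have [c [hc hcs]] := IH hs.
have [d hd] := hu p.2.
exists (fun i => p.1 * d i + c i); split.
  by move=> i; apply: rpredD => //; rewrite mulrC; apply: hJ.
rewrite big_cons hcs hd scaler_sumr -big_split /=; apply: eq_bigr => i _.
by rewrite scalerA scalerDl.
Qed.

Hypothesis hJM : forall m : M, m \in spanI J.

Lemma nak_gen (t : seq M) (u : R) : 1 - u \in J -> (forall m, spn t (u *: m)) ->
  exists j, j \in J /\ forall m : M, (1 - j) *: m = 0.
Proof.
elim: t u => [|y t IH] u hu hsp.
  exists (1 - u); split => // m; rewrite subKr.
  by have [c ->] := hsp m; rewrite big_ord0.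
have [s [hs ys]] := pboolP _ (hJM y).
have [c [hc hcs]] := spnJ_sum hsp hs.
have huy : u *: y = c 0%N *: y + \sum_(i < size t) c i.+1 *: t`_i.
  by rewrite -[X in _ = X](big_ord_recl _ (fun i : 'I_(size t).+1 => c i *: (y :: t)`_i)) -hcs ys scaler_sumr; apply: eq_bigr => p _; rewrite !scalerA mulrC.
set e := c 0%N.
have hey : (u - e) *: y = \sum_(i < size t) c i.+1 *: t`_i.
  by rewrite scalerBl huy addrC addKr.
apply: (IH ((u - e) * u)).
  have -> : 1 - (u - e) * u = (1 - u) + u * (1 - u) + u * e by ring.
  by apply: rpredD; [apply: rpredD => //; apply: hJ | apply: hJ; exact: hc].
move=> m; have [d hd] := hsp m.
rewrite big_ord_recl /= in hd.
exists (fun i => d 0%N * c i.+1 + (u - e) * d i.+1).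
rewrite -scalerA hd scalerDr scalerA mulrC -scalerA hey scaler_sumr scaler_sumr -big_split /=.
apply: eq_bigr => i _; rewrite !scalerA scalerDl; congr (_ + _).
Qed.
End Nak.

Section Main.
Variables (R : comPzRingType) (M : lmodType R).
Hypothesis hfg : finitely_generated M.
Hypothesis hflat : flat M.

Lemma pure_el (a : R) : a \in ann M -> exists b, b \in ann M /\ a * b = a.
Proof.
move=> /pboolP ha.
have hJM : forall m : M, m \in spanI (kerm a) by move=> m; apply: flat_kill.
have [gens hg] := hfg.
have hu : 1 - 1 \in kerm a by rewrite subrr rpred0.
have hs : forall m, spn gens (1 *: m).
  by move=> m; rewrite scale1r; have [c ->] := hg m; exists (fun i => c`_i).
have [j [hj hj1]] := @nak_gen R (kerm a) (@kerm_ideal R a) M hJM gens 1 hu hs.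
exists (1 - j); split; first by apply/pboolP.
move: hj; rewrite unfold_in /= => /eqP hj.
by rewrite mulrBr mulr1 hj subr0.
Qed.

Lemma pure_list (l : seq R) : all (fun r => r \in ann M) l ->
  exists b, b \in ann M /\ all (fun r => r * b == r) l.
Proof.
elim: l => [|r l IH] /=.
  by move=> _; exists 0; split => //; exact: rpred0.
move=> /andP [hr hl]; have [b1 [hb1 e1]] := pure_el hr.
have [b2 [hb2 e2]] := IH hl.
exists (b1 + b2 - b1 * b2); split.
  apply: rpredB; first exact: rpredD.
  exact: ann_mul_closed.
apply/andP; split.
  by apply/eqP; rewrite mulrBr mulrDr mulrA e1 addrK.
apply/allP => x xl; have /eqP e := allP e2 x xl.
by apply/eqP; rewrite mulrBr mulrDr e mulrA [x * b1]mulrC -mulrA e addrC addKr.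
Qed.
End Main.

Lemma sum_reduce (R : comPzRingType) (I : zmodClosed R) (hI : forall a x, x \in I -> a * x \in I)
  (W P : lmodType R) (b : W -> quot_mod hI -> P) : bilinear_map b ->
  forall s : seq (W * quot_mod hI),
  \sum_(x <- s) b x.1 x.2 = b (\sum_(x <- s) qrep x.2 *: x.1) (qpi hI 1).
Proof.
move=> hb; have [b0 b0' bD bZ bZ'] := bil_props hb.
elim => [|x s IH]; first by rewrite !big_nil b0.
by rewrite !big_cons IH bD bZ -bZ' qpiZ mulr1 qpi_repr.
Qed.

Theorem corollary2p3 (R : comPzRingType) (M : lmodType R)
  (hfg : finitely_generated M) (hflat : flat M) :
  pure_ideal (@ann_mul_closed R M).
Proof.
rewrite /pure_ideal => N N' f finj s Hs P bb hbb.
set hI := @ann_mul_closed R M.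
have [b0 b0' bD bZ bZ'] := bil_props hbb.
rewrite (sum_reduce hbb); set n := \sum_(x <- s) qrep x.2 *: x.1.
have := Hs _ _ (qb_bil2 hI N').
rewrite (sum_reduce (qb_bil2 hI N')) big_map /=.
have -> : \sum_(x <- s) qrep x.2 *: f x.1 = f n.
  by rewrite /n linear_sum; apply: eq_bigr => x _; rewrite linearZ.
rewrite qb_pi scale1r => /vpi0P /pboolP [t [ht fn_eq]].
have hl : all (fun r => r \in ann M) (map fst t) by rewrite all_map.
have [c [hc hcall]] := pure_list hfg hflat hl.
have hcn : c *: n = n.
  apply: finj; rewrite linearZZ fn_eq scaler_sumr big_seq [RHS]big_seq.
  apply: eq_bigr => p pt; rewrite scalerA mulrC.
  by rewrite (eqP (allP hcall p.1 (map_f fst pt))).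
by rewrite -hcn bZ -bZ' qpiZ mulr1 qpi0 ?b0'.
Qed.
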